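(* Let $b\in\mathbb{R}$ and $\varepsilon_0\in(0,1)$ be such that $\det\Delta_\varepsilon(s)\ne0$ for all $\varepsilon\in[0,\varepsilon_0]$ and all $s$ on the line $\Sigma=\{b+iy:y\in\mathbb{R}\}$. Then there is $\varepsilon_1\in(0,\varepsilon_0]$ such that $$\sup\{|s|\,\|\Delta_\varepsilon(s)^{-1}\|:0\le\varepsilon\le\varepsilon_1,\ s\in\Sigma\}<\infty\quad\text{and}\quad \sup\{|s|\,\|D_\varepsilon(s)^{-1}\|:0<\varepsilon\le\varepsilon_1,\ s\in\Sigma\}<\infty.$$
   Context: $L:C([-\tau,0];\mathbb{R}^N)\to\mathbb{R}^N$ is a bounded linear operator; $L(e^{s\cdot}I)$ is the complex $N\times N$ matrix whose $j$-th column is $L$ applied to $\theta\mapsto e^{s\theta}e_j$. $\Delta_\varepsilon(s)=\varepsilon^2s^2I-sI+L(e^{s\cdot}I)$, and for $\varepsilon>0$, $D_\varepsilon(s)$ is the $2N\times2N$ block matrix $\begin{pmatrix}sI&-I\\ \varepsilon^{-2}L(e^{s\cdot}I)&(s-\varepsilon^{-2})I\end{pmatrix}$ (the characteristic matrix of the first-order system equivalent to $\varepsilon^2x''-x'+Lx_t=0$), $I$ the $N\times N$ identity. *)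

(* Defs.v *)
From Stdlib Require Import Reals Arith.
Open Scope R_scope.

Record C := mkC { Re : R; Im : R }.
Definition C0 : C := mkC 0 0.
Definition C1 : C := mkC 1 0.
Definition RtoC (x : R) : C := mkC x 0.
Definition Cadd (z w : C) : C := mkC (Re z + Re w) (Im z + Im w).
Definition Copp (z : C) : C := mkC (- Re z) (- Im z).
Definition Csub (z w : C) : C := Cadd z (Copp w).
Definition Cmul (z w : C) : C :=
  mkC (Re z * Re w - Im z * Im w) (Re z * Im w + Im z * Re w).
Definition Cmod (z : C) : R := sqrt (Re z * Re z + Im z * Im z).
Definition Cinv (z : C) : C :=
  let d := Re z * Re z + Im z * Im z in mkC (Re z / d) (- Im z / d).
Definition Cdiv (z w : C) : C := Cmul z (Cinv w).

Definition cmat := nat -> nat -> C.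

Fixpoint Csum (n : nat) (f : nat -> C) : C :=
  match n with O => C0 | S m => Cadd (Csum m f) (f m) end.

Definition sgn (k : nat) : C := if Nat.even k then C1 else Copp C1.

Definition minor (r c : nat) (A : cmat) : cmat :=
  fun i j => A (if (i <? r)%nat then i else S i) (if (j <? c)%nat then j else S j).

Fixpoint det (n : nat) (A : cmat) : C :=
  match n with
  | O => C1
  | S m => Csum n (fun j => Cmul (sgn j) (Cmul (A O j) (det m (minor O j A))))
  end.

(* inverse by the adjugate formula (the inverse whenever det n A <> 0) *)
Definition inv (n : nat) (A : cmat) : cmat :=
  fun i j => Cdiv (Cmul (sgn (i + j)%nat) (det (pred n) (minor j i A))) (det n A).

(* functions [-tau,0] -> R^N are represented as R -> nat -> R
   (only theta in [-tau,0] and components k < N are meaningful) *)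
Definition cont_on (a b : R) (f : R -> R) : Prop :=
  forall x, a <= x <= b -> limit1_in f (fun y => a <= y <= b) (f x) x.

Definition in_CN (N : nat) (tau : R) (f : R -> nat -> R) : Prop :=
  forall k, (k < N)%nat -> cont_on (- tau) 0 (fun t => f t k).

Definition bounded_linear (N : nat) (tau : R) (L : (R -> nat -> R) -> nat -> R) : Prop :=
  (forall f g, in_CN N tau f -> in_CN N tau g -> forall i, (i < N)%nat ->
      L (fun t k => f t k + g t k) i = L f i + L g i) /\
  (forall (c : R) f, in_CN N tau f -> forall i, (i < N)%nat ->
      L (fun t k => c * f t k) i = c * L f i) /\
  (exists M, forall f (c : R), in_CN N tau f ->
      (forall t k, - tau <= t <= 0 -> (k < N)%nat -> Rabs (f t k) <= c) ->
      forall i, (i < N)%nat -> Rabs (L f i) <= M * c).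

(* L(e^{s.} I): column j is (complexified) L applied to theta |-> e^{s theta} e_j *)
Definition Lexp (L : (R -> nat -> R) -> nat -> R) (s : C) : cmat :=
  fun i j =>
    mkC (L (fun t k => if (k =? j)%nat then exp (Re s * t) * cos (Im s * t) else 0) i)
        (L (fun t k => if (k =? j)%nat then exp (Re s * t) * sin (Im s * t) else 0) i).

Definition delta (i j : nat) : C := if (i =? j)%nat then C1 else C0.

(* Delta_eps(s) = eps^2 s^2 I - s I + L(e^{s.} I) *)
Definition DeltaE (L : (R -> nat -> R) -> nat -> R) (eps : R) (s : C) : cmat :=
  fun i j => Cadd (Cmul (Csub (Cmul (RtoC (eps * eps)) (Cmul s s)) s) (delta i j))
                  (Lexp L s i j).

(* D_eps(s) = [[ s I , -I ], [ eps^-2 L(e^{s.} I) , (s - eps^-2) I ]], size 2N *)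
Definition Dmat (N : nat) (L : (R -> nat -> R) -> nat -> R) (eps : R) (s : C) : cmat :=
  fun i j =>
    if (i <? N)%nat then
      (if (j <? N)%nat then Cmul s (delta i j) else Copp (delta i (j - N)%nat))
    else
      (if (j <? N)%nat then Cmul (RtoC (/ (eps * eps))) (Lexp L s (i - N)%nat j)
       else Cmul (Csub s (RtoC (/ (eps * eps)))) (delta (i - N)%nat (j - N)%nat)).

(* Main.v *)
Require Import Defs.
From Stdlib Require Import Reals Arith Lra Lia Psatz ClassicalEpsilon FunctionalExtensionality.
From HB Require Import structures.
From mathcomp Require all_boot all_algebra.
Open Scope R_scope.
Notation C := Defs.C.
Notation C0 := Defs.C0.
Notation C1 := Defs.C1.

Lemma C_ext (z w : Defs.C) : Re z = Re w -> Im z = Im w -> z = w.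
Proof. destruct z, w; simpl; intros; subst; reflexivity. Qed.

Definition Ceqb (z w : Defs.C) : bool :=
  if Req_dec_T (Re z) (Re w) then (if Req_dec_T (Im z) (Im w) then true else false) else false.

Definition Xmat (N : nat) (Lx : cmat) (eps : R) (s : C) (P : cmat) : cmat := fun i j =>
  if (i <? N)%nat then
    (if (j <? N)%nat then Cmul (Csub (Cmul (RtoC (eps * eps)) s) Defs.C1) (P i j)
     else Cmul (RtoC (eps * eps)) (P i (j - N)%nat))
  else
    (if (j <? N)%nat then Copp (Csum N (fun k => Cmul (Lx (i - N)%nat k) (P k j)))
     else Cmul (Cmul (RtoC (eps * eps)) s) (P (i - N)%nat (j - N)%nat)).

Module MC.
Import all_boot all_algebra.
Import GRing.Theory.

Lemma Ceqb_axiom : Equality.axiom Ceqb.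
Proof.
move=> z w; rewrite /Ceqb; case: Req_dec_T => h1; last first.
  by constructor => E; apply: h1; rewrite E.
case: Req_dec_T => h2; constructor; first exact: C_ext.
by move=> E; apply: h2; rewrite E.
Qed.

HB.instance Definition _ := hasDecEq.Build Defs.C Ceqb_axiom.

Definition Cfind (P : pred Defs.C) (n : nat) : option C :=
  let x := epsilon (inhabits Defs.C0) (fun x => P x) in if P x then Some x else None.

Lemma Cfind_correct (P : pred Defs.C) n x : Cfind P n = Some x -> P x.
Proof. rewrite /Cfind; case: ifP => // h [<-]; exact: h. Qed.

Lemma Cfind_complete (P : pred Defs.C) : (exists x, P x) -> exists n, Cfind P n.
Proof.
move=> ex; exists 0%N; rewrite /Cfind.
have := epsilon_spec (inhabits Defs.C0) (fun x => P x) ex.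
by move=> ->.
Qed.

Lemma Cfind_ext (P Q : pred Defs.C) : P =1 Q -> Cfind P =1 Cfind Q.
Proof.
move=> h; have E : P = Q by apply: functional_extensionality.
by rewrite E.
Qed.

HB.instance Definition _ := hasChoice.Build Defs.C Cfind_correct Cfind_complete Cfind_ext.

Lemma Cadd_assoc : associative Cadd.
Proof. move=> x y z; apply: C_ext => /=; ring. Qed.
Lemma Cadd_comm : commutative Cadd.
Proof. move=> x y; apply: C_ext => /=; ring. Qed.
Lemma Cadd0 : left_id Defs.C0 Cadd.
Proof. move=> x; apply: C_ext => /=; ring. Qed.
Lemma CaddN : left_inverse Defs.C0 Copp Cadd.
Proof. move=> x; apply: C_ext => /=; ring. Qed.

HB.instance Definition _ := GRing.isZmodule.Build Defs.C Cadd_assoc Cadd_comm Cadd0 CaddN.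

Lemma Cmul_assoc : associative Cmul.
Proof. move=> x y z; apply: C_ext => /=; ring. Qed.
Lemma Cmul_comm : commutative Cmul.
Proof. move=> x y; apply: C_ext => /=; ring. Qed.
Lemma Cmul1 : left_id Defs.C1 Cmul.
Proof. move=> x; apply: C_ext => /=; ring. Qed.
Lemma Cmul_addl : left_distributive Cmul Cadd.
Proof. move=> x y z; apply: C_ext => /=; ring. Qed.
Lemma C1_neq0 : Defs.C1 != Defs.C0.
Proof. apply/eqP => h; have := f_equal Re h => /=; lra. Qed.

HB.instance Definition _ := GRing.Zmodule_isComNzRing.Build Defs.C Cmul_assoc Cmul_comm Cmul1 Cmul_addl C1_neq0.

Lemma CmulV (x : Defs.C) : x != 0%R -> Cmul (Cinv x) x = Defs.C1.
Proof.
move=> /eqP hx.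
have hd : Re x * Re x + Im x * Im x <> 0.
  move=> h; apply: hx; apply: C_ext => /=; nra.
apply: C_ext => /=; field; exact: hd.
Qed.
Lemma Cinv0 : Cinv Defs.C0 = Defs.C0.
Proof. apply: C_ext => /=; unfold Rdiv; ring. Qed.

HB.instance Definition _ := GRing.ComNzRing_isField.Build Defs.C CmulV Cinv0.

Local Open Scope ring_scope.

Lemma Emul (x y : C) : Cmul x y = x * y. Proof. by []. Qed.
Lemma Eadd (x y : C) : Cadd x y = x + y. Proof. by []. Qed.
Lemma Eopp (x : C) : Copp x = - x. Proof. by []. Qed.
Lemma E0 : Defs.C0 = 0. Proof. by []. Qed.
Lemma E1 : Defs.C1 = 1. Proof. by []. Qed.
Lemma Einv (x : C) : Cinv x = x^-1. Proof. by []. Qed.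

Definition mx (n : nat) (A : cmat) : 'M[C]_n := \matrix_(i < n, j < n) A i j.

Lemma Csum_big n (f : nat -> C) : Csum n f = \sum_(j < n) f j.
Proof.
elim: n => [|n IH] /=; first by rewrite big_ord0.
by rewrite big_ord_recr /= IH.
Qed.

Lemma sgn_sign k : sgn k = (-1) ^+ k.
Proof.
elim: k => [|k IH]; first by [].
rewrite exprS -IH /sgn Nat.even_succ -Nat.negb_even.
by case: (Nat.even k) => /=; rewrite ?mulN1r ?opprK.
Qed.

Lemma ltb_bump (j k : nat) : (if (k <? j)%nat then k else S k) = bump j k.
Proof.
rewrite /bump; case: (ltnP k j) => h.
  by have -> : (k <? j)%nat = true by apply/Nat.ltb_lt/ltP.
have -> : (k <? j)%nat = false.
  by apply/Nat.ltb_ge/leP.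
by rewrite add1n.
Qed.

Lemma minor_mx m (A : cmat) (r c : 'I_m.+1) :
  mx m (minor r c A) = row' r (col' c (mx m.+1 A)).
Proof.
apply/matrixP => i j; rewrite !mxE /minor /=.
by rewrite !ltb_bump.
Qed.

Lemma det_mx n (A : cmat) : det n A = \det (mx n A).
Proof.
elim: n A => [|m IH] A; first by rewrite det_mx00.
change (det m.+1 A) with (Csum m.+1 (fun j => Cmul (sgn j) (Cmul (A O j) (det m (minor O j A))))).
rewrite (expand_det_row _ ord0) Csum_big.
apply: eq_bigr => j _.
rewrite /cofactor IH (minor_mx m A ord0 j) !mxE sgn_sign.
by rewrite !Emul add0n mulrCA.
Qed.

Lemma inv_mx n (A : cmat) i j (hi : (i < n)%N) (hj : (j < n)%N) :
  det n A <> Defs.C0 -> Defs.inv n A i j = invmx (mx n A) (Ordinal hi) (Ordinal hj).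
Proof.
case: n A hi hj => [|m] A hi hj //.
move=> hd.
have hu : mx m.+1 A \in unitmx.
  by rewrite unitmxE unitfE -det_mx; apply/eqP.
rewrite /invmx hu !mxE /cofactor.
rewrite /Defs.inv /Cdiv [det m.+1 A]det_mx.
change (Nat.pred m.+1) with m.
rewrite det_mx (minor_mx m A (Ordinal hj) (Ordinal hi)) sgn_sign.
by rewrite !Emul Einv plusE addnC mulrC.
Qed.

Lemma inv_mx' n (A : cmat) (k l : 'I_n) :
  det n A <> Defs.C0 -> Defs.inv n A k l = invmx (mx n A) k l.
Proof.
move=> h; rewrite (@inv_mx n A k l (ltn_ord k) (ltn_ord l) h).
by congr (invmx _ _ _); apply: val_inj.
Qed.

Lemma ltb_t {k N : nat} : (k < N)%N -> (k <? N)%nat = true.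
Proof. by move=> h; apply/Nat.ltb_lt/ltP. Qed.
Lemma ltb_f {k N : nat} : (N <= k)%N -> (k <? N)%nat = false.
Proof. by move=> h; apply/Nat.ltb_ge/leP. Qed.

Lemma delta_E (i k : nat) : delta i k = ((i == k)%:R : C).
Proof.
rewrite /delta; case: (Nat.eqb_spec i k) => [->|h]; first by rewrite eqxx.
by have /negbTE-> : i != k by apply/eqP.
Qed.

Lemma sum_delta N (c : C) (G : nat -> C) i : (i < N)%N ->
  \sum_(k < N) (c * delta i k) * G k = c * G i.
Proof.
move=> hi; rewrite (bigD1 (Ordinal hi)) //= big1 ?addr0.
  by rewrite delta_E eqxx mulr1.
move=> k hk; rewrite delta_E.
have /negbTE-> : i != k.
  by apply/eqP => E; move: hk; rewrite -(inj_eq val_inj) /= E eqxx.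
by rewrite mulr0 mul0r.
Qed.

Lemma sum_deltaN N (G : nat -> C) i : (i < N)%N ->
  \sum_(k < N) (- delta i k) * G k = - G i.
Proof.
move=> hi; rewrite -mulN1r -(@sum_delta N (-1) G i hi).
by apply: eq_bigr => k _; rewrite mulN1r.
Qed.

Lemma sum_split N (F : nat -> C) :
  \sum_(k < (2 * N)%N) F k = \sum_(k < N) F k + \sum_(k < N) F (k + N)%N.
Proof.
rewrite -(big_mkord xpredT F) -(big_mkord xpredT (fun k => F (k + N)%N)) mul2n -addnn (@big_cat_nat _ _ _ N) ?leq_addr //.
congr (_ + _); first by rewrite big_mkord.
have := @big_addn _ 0 +%R 0 (N + N) N xpredT F.
by rewrite add0n addnK => ->.
Qed.

Definition lam (eps : R) (s : C) : C := Csub (Cmul (RtoC (eps * eps)) (Cmul s s)) s.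

Lemma F1 N L eps s i j (hi : (i < N)%N) (hj : (j < N)%N) :
  det N (DeltaE L eps s) <> Defs.C0 ->
  lam eps s * Defs.inv N (DeltaE L eps s) i j
   + Csum N (fun l => Cmul (Lexp L s i l) (Defs.inv N (DeltaE L eps s) l j)) = delta i j.
Proof.
move=> hd.
have hu : mx N (DeltaE L eps s) \in unitmx.
  by rewrite unitmxE unitfE -det_mx; apply/eqP.
have := congr1 (fun M : 'M[C]_N => M (Ordinal hi) (Ordinal hj)) (mulmxV hu).
rewrite !mxE delta_E => <-.
rewrite -(@sum_delta N (lam eps s) (fun k => Defs.inv N (DeltaE L eps s) k j) i hi).
rewrite Csum_big -big_split.
apply: eq_bigr => k _.
rewrite !mxE -inv_mx' //.
have -> : DeltaE L eps s (Ordinal hi) k = lam eps s * delta i k + Lexp L s i k by [].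
rewrite Emul mulrDl; symmetry; exact: mulrDl.
Qed.

Definition mu (eps : R) (s : C) : C := Csub (Cmul (RtoC (eps * eps)) s) Defs.C1.

Lemma s_mu (eps : R) (s : C) : s * mu eps s = lam eps s.
Proof. apply: C_ext => /=; ring. Qed.

Lemma DX_entry N L (eps : R) (s : C) (i j : nat) : eps <> IZR BinNums.Z0 ->
  det N (DeltaE L eps s) <> Defs.C0 -> (i < 2 * N)%N -> (j < 2 * N)%N ->
  \sum_(k < N) Dmat N L eps s i k * Xmat N (Lexp L s) eps s (Defs.inv N (DeltaE L eps s)) k j
  + \sum_(k < N) Dmat N L eps s i (k + N)%N * Xmat N (Lexp L s) eps s (Defs.inv N (DeltaE L eps s)) (k + N)%N j
  = delta i j.
Proof.
move=> he hd hi2 hj2.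
set P := Defs.inv N (DeltaE L eps s).
have kN : forall k : 'I_N, (k + N <? N)%nat = false.
  by move=> k; apply: ltb_f; rewrite leq_addl.
have kNN : forall k : 'I_N, (k + N - N)%coq_nat = k.
  by move=> k; rewrite minusE addnK.
case: (ltnP i N) => hi; case: (ltnP j N) => hj.
- have S1 : \sum_(k < N) Dmat N L eps s i k * Xmat N (Lexp L s) eps s P k j
          = s * (mu eps s * P i j).
    rewrite -(@sum_delta N s (fun k => mu eps s * P k j) i hi).
    apply: eq_bigr => k _.
    by rewrite /Dmat /Xmat (ltb_t hi) (ltb_t (ltn_ord k)) (ltb_t hj).
  have S2 : \sum_(k < N) Dmat N L eps s i (k + N)%N * Xmat N (Lexp L s) eps s P (k + N)%N j
          = - - Csum N (fun l => Cmul (Lexp L s i l) (P l j)).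
    rewrite -(@sum_deltaN N (fun k => - Csum N (fun l => Cmul (Lexp L s k l) (P l j))) i hi).
    apply: eq_bigr => k _.
    by rewrite /Dmat /Xmat (ltb_t hi) kN (ltb_t hj) kNN.
  by rewrite S1 S2 opprK mulrA s_mu F1.
- have [j' Ej] : exists j', j = (j' + N)%N by exists (j - N)%N; rewrite subnK.
  subst j.
  have jN : (j' + N - N)%coq_nat = j' by rewrite minusE addnK.
  have S1 : \sum_(k < N) Dmat N L eps s i k * Xmat N (Lexp L s) eps s P k (j' + N)%N
          = s * (RtoC (eps * eps) * P i j').
    rewrite -(@sum_delta N s (fun k => RtoC (eps * eps) * P k j') i hi).
    apply: eq_bigr => k _.
    by rewrite /Dmat /Xmat (ltb_t hi) (ltb_t (ltn_ord k)) (ltb_f hj) jN.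
  have S2 : \sum_(k < N) Dmat N L eps s i (k + N)%N * Xmat N (Lexp L s) eps s P (k + N)%N (j' + N)%N
          = - (RtoC (eps * eps) * s * P i j').
    rewrite -(@sum_deltaN N (fun k => RtoC (eps * eps) * s * P k j') i hi).
    apply: eq_bigr => k _.
    by rewrite /Dmat /Xmat (ltb_t hi) kN (ltb_f hj) kNN jN.
  have -> : delta i (j' + N) = Defs.C0.
    rewrite delta_E; have /negbTE-> : i != (j' + N)%N.
      by apply/eqP => E; move: hi; rewrite E ltnNge leq_addl.
    by [].
  rewrite S1 S2; apply: C_ext => /=; ring.
- have [i' Ei] : exists i', i = (i' + N)%N by exists (i - N)%N; rewrite subnK.
  subst i.
  have iN : (i' + N - N)%coq_nat = i' by rewrite minusE addnK.
  have hi' : (i' < N)%N by rewrite -(ltn_add2r N) addnn -mul2n.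
  have S1 : \sum_(k < N) Dmat N L eps s (i' + N)%N k * Xmat N (Lexp L s) eps s P k j
          = (RtoC (/ (eps * eps)) * mu eps s) * Csum N (fun l => Cmul (Lexp L s i' l) (P l j)).
    rewrite Csum_big mulr_sumr.
    apply: eq_bigr => k _.
    rewrite /Dmat /Xmat (ltb_f hi) (ltb_t (ltn_ord k)) (ltb_t hj) iN.
    by rewrite !Emul mulrACA.
  have S2 : \sum_(k < N) Dmat N L eps s (i' + N)%N (k + N)%N * Xmat N (Lexp L s) eps s P (k + N)%N j
          = Csub s (RtoC (/ (eps * eps))) * - Csum N (fun l => Cmul (Lexp L s i' l) (P l j)).
    rewrite -(@sum_delta N (Csub s (RtoC (/ (eps * eps)))) (fun k => - Csum N (fun l => Cmul (Lexp L s k l) (P l j))) i' hi').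
    apply: eq_bigr => k _.
    by rewrite /Dmat /Xmat (ltb_f hi) kN (ltb_t hj) iN kNN.
  have -> : delta (i' + N) j = Defs.C0.
    rewrite delta_E; have /negbTE-> : (i' + N)%N != j.
      by apply/eqP => E; move: hj; rewrite -E ltnNge leq_addl.
    by [].
  rewrite S1 S2; set S := Csum _ _; clearbody S.
  apply: C_ext => /=; field; repeat split; try exact: he; try (apply: Rmult_integral_contrapositive_currified; exact: he).
- have [i' Ei] : exists i', i = (i' + N)%N by exists (i - N)%N; rewrite subnK.
  subst i.
  have [j' Ej] : exists j', j = (j' + N)%N by exists (j - N)%N; rewrite subnK.
  subst j.
  have iN : (i' + N - N)%coq_nat = i' by rewrite minusE addnK.
  have jN : (j' + N - N)%coq_nat = j' by rewrite minusE addnK.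
  have hi' : (i' < N)%N by rewrite -(ltn_add2r N) addnn -mul2n.
  have hj' : (j' < N)%N by rewrite -(ltn_add2r N) addnn -mul2n.
  have S1 : \sum_(k < N) Dmat N L eps s (i' + N)%N k * Xmat N (Lexp L s) eps s P k (j' + N)%N
          = (RtoC (/ (eps * eps)) * RtoC (eps * eps)) * Csum N (fun l => Cmul (Lexp L s i' l) (P l j')).
    rewrite Csum_big mulr_sumr.
    apply: eq_bigr => k _.
    rewrite /Dmat /Xmat (ltb_f hi) (ltb_t (ltn_ord k)) (ltb_f hj) iN jN.
    by rewrite !Emul mulrACA.
  have S2 : \sum_(k < N) Dmat N L eps s (i' + N)%N (k + N)%N * Xmat N (Lexp L s) eps s P (k + N)%N (j' + N)%N
          = Csub s (RtoC (/ (eps * eps))) * (RtoC (eps * eps) * s * P i' j').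
    rewrite -(@sum_delta N (Csub s (RtoC (/ (eps * eps)))) (fun k => RtoC (eps * eps) * s * P k j') i' hi').
    apply: eq_bigr => k _.
    by rewrite /Dmat /Xmat (ltb_f hi) kN (ltb_f hj) iN kNN jN.
  have -> : delta (i' + N) (j' + N) = delta i' j' by rewrite !delta_E eqn_add2r.
  rewrite -(@F1 N L eps s i' j' hi' hj' hd) S1 S2 /lam -/P.
  set S := Csum _ _; clearbody S; set p := P i' j'; clearbody p.
  apply: C_ext => /=; field; repeat split; try exact: he; try (apply: Rmult_integral_contrapositive_currified; exact: he).
Qed.

Lemma D_inv N L (eps : R) (s : C) i j : eps <> IZR BinNums.Z0 ->
  det N (DeltaE L eps s) <> Defs.C0 -> (i < 2 * N)%N -> (j < 2 * N)%N ->
  Defs.inv (2 * N)%N (Dmat N L eps s) i j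
  = Xmat N (Lexp L s) eps s (Defs.inv N (DeltaE L eps s)) i j.
Proof.
move=> he hd hi hj.
set D := mx (2 * N)%N (Dmat N L eps s).
set X := mx (2 * N)%N (Xmat N (Lexp L s) eps s (Defs.inv N (DeltaE L eps s))).
have DX : D *m X = 1%:M.
  apply/matrixP => a c; rewrite !mxE.
  under eq_bigr do rewrite !mxE.
  rewrite (sum_split N (fun k => Dmat N L eps s a k * Xmat N (Lexp L s) eps s (Defs.inv N (DeltaE L eps s)) k c)).
  rewrite (@DX_entry N L eps s a c he hd (ltn_ord a) (ltn_ord c)).
  by rewrite delta_E.
have [uD _] := mulmx1_unit DX.
have invD : invmx D = X.
  by rewrite -[invmx D]mulmx1 -DX mulmxA mulVmx // mul1mx.
have hdD : det (2 * N)%N (Dmat N L eps s) <> Defs.C0.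
  rewrite det_mx; move: uD; rewrite unitmxE unitfE => /eqP; exact.
by rewrite (@inv_mx (2 * N)%N _ i j hi hj hdD) -/D invD mxE.
Qed.

Lemma D_inv' N L (eps : R) (s : C) i j : eps <> IZR BinNums.Z0 ->
  det N (DeltaE L eps s) <> Defs.C0 -> (i < Nat.mul 2 N)%coq_nat -> (j < Nat.mul 2 N)%coq_nat ->
  Defs.inv (Nat.mul 2 N) (Dmat N L eps s) i j
  = Xmat N (Lexp L s) eps s (Defs.inv N (DeltaE L eps s)) i j.
Proof. move=> he hd /ltP hi /ltP hj. exact: D_inv. Qed.
End MC.

Lemma Cmod_ge0 z : 0 <= Cmod z.
Proof. unfold Cmod; apply sqrt_pos. Qed.

Lemma Cmod_sq z : Cmod z * Cmod z = Re z * Re z + Im z * Im z.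
Proof. unfold Cmod; apply sqrt_sqrt; nra. Qed.

Lemma le_sqrt_of_sq a X : 0 <= a -> a * a <= X -> a <= sqrt X.
Proof.
intros Ha HX. rewrite <- (sqrt_Rsqr a Ha). apply sqrt_le_1_alt. unfold Rsqr; lra.
Qed.

Lemma Cmod_le_of_sq z a : 0 <= a -> Re z * Re z + Im z * Im z <= a * a -> Cmod z <= a.
Proof.
intros Ha H. unfold Cmod. rewrite <- (sqrt_Rsqr a Ha). apply sqrt_le_1_alt. unfold Rsqr; lra.
Qed.

Lemma Cmod_mul z w : Cmod (Cmul z w) = Cmod z * Cmod w.
Proof.
unfold Cmod. rewrite <- sqrt_mult by nra. f_equal. simpl. ring.
Qed.

Lemma Cmod_add z w : Cmod (Cadd z w) <= Cmod z + Cmod w.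
Proof.
apply Cmod_le_of_sq.
- pose proof (Cmod_ge0 z); pose proof (Cmod_ge0 w); lra.
- pose proof (Cmod_sq z); pose proof (Cmod_sq w).
  pose proof (Cmod_ge0 z); pose proof (Cmod_ge0 w).
  assert (CS : (Re z * Re w + Im z * Im w) <= Cmod z * Cmod w).
  { assert (Hsq : (Re z * Re w + Im z * Im w) * (Re z * Re w + Im z * Im w)
                  <= (Cmod z * Cmod w) * (Cmod z * Cmod w)).
    { replace ((Cmod z * Cmod w) * (Cmod z * Cmod w)) with
        ((Cmod z * Cmod z) * (Cmod w * Cmod w)) by ring.
      rewrite H, H0. pose proof (Rle_0_sqr (Re z * Im w - Im z * Re w)). unfold Rsqr in *. nra. }
    apply Rsqr_incr_0_var; [unfold Rsqr; lra| nra]. }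
  simpl.
  assert (E1 : (Re z + Re w) * (Re z + Re w) + (Im z + Im w) * (Im z + Im w) =
     (Re z * Re z + Im z * Im z) + (Re w * Re w + Im w * Im w) + 2 * (Re z * Re w + Im z * Im w)) by ring.
  assert (E2 : (Cmod z + Cmod w) * (Cmod z + Cmod w) =
     Cmod z * Cmod z + Cmod w * Cmod w + 2 * (Cmod z * Cmod w)) by ring.
  lra.
Qed.

Lemma Cmod_opp z : Cmod (Copp z) = Cmod z.
Proof. unfold Cmod; simpl; f_equal; ring. Qed.

Lemma Cmod_sub z w : Cmod (Csub z w) <= Cmod z + Cmod w.
Proof. unfold Csub. rewrite <- (Cmod_opp w). apply Cmod_add. Qed.

Lemma Cmod_RtoC x : Cmod (RtoC x) = Rabs x.
Proof. unfold Cmod, RtoC; simpl. rewrite <- sqrt_Rsqr_abs. f_equal. unfold Rsqr; ring. Qed.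

Lemma Cmod_C0 : Cmod C0 = 0.
Proof. unfold Cmod; simpl. replace (0*0+0*0) with 0 by ring. apply sqrt_0. Qed.

Lemma Cmod_C1 : Cmod C1 = 1.
Proof. unfold Cmod; simpl. replace (1*1+0*0) with 1 by ring. apply sqrt_1. Qed.

Lemma Cmod_sgn k : Cmod (sgn k) = 1.
Proof. unfold sgn; destruct (Nat.even k); [apply Cmod_C1| rewrite Cmod_opp; apply Cmod_C1]. Qed.

Lemma Cmod_delta i j : Cmod (delta i j) <= 1.
Proof. unfold delta; destruct (i =? j)%nat; [rewrite Cmod_C1| rewrite Cmod_C0]; lra. Qed.

Lemma Cmod_Re z : Rabs (Re z) <= Cmod z.
Proof. unfold Cmod. rewrite <- sqrt_Rsqr_abs. apply sqrt_le_1_alt. unfold Rsqr; nra. Qed.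

Lemma Cmod_Im z : Rabs (Im z) <= Cmod z.
Proof. unfold Cmod. rewrite <- sqrt_Rsqr_abs. apply sqrt_le_1_alt. unfold Rsqr; nra. Qed.

Lemma Cmod_ReIm z : Cmod z <= Rabs (Re z) + Rabs (Im z).
Proof.
apply Cmod_le_of_sq.
- pose proof (Rabs_pos (Re z)); pose proof (Rabs_pos (Im z)); lra.
- pose proof (Rabs_pos (Re z)); pose proof (Rabs_pos (Im z)).
  assert (E1 : Re z * Re z = Rabs (Re z) * Rabs (Re z)) by (rewrite <- Rabs_mult; rewrite Rabs_pos_eq; nra).
  assert (E2 : Im z * Im z = Rabs (Im z) * Rabs (Im z)) by (rewrite <- Rabs_mult; rewrite Rabs_pos_eq; nra).
  nra.
Qed.

Lemma Cmod_nz z : z <> C0 -> 0 < Cmod z.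
Proof.
intros H. unfold Cmod. apply sqrt_lt_R0.
destruct (Req_dec (Re z) 0), (Req_dec (Im z) 0).
- exfalso; apply H; apply C_ext; simpl; auto.
- nra.
- nra.
- nra.
Qed.

Lemma Cmod_div z w : w <> C0 -> Cmod (Cdiv z w) = Cmod z / Cmod w.
Proof.
intros Hw. pose proof (Cmod_nz w Hw) as Hp. unfold Cdiv. rewrite Cmod_mul.
unfold Rdiv. f_equal.
assert (Hd : Re w * Re w + Im w * Im w <> 0).
{ rewrite <- Cmod_sq. nra. }
assert (E : Cmod (Cinv w) * Cmod w = 1).
{ rewrite <- Cmod_mul. unfold Cmod. simpl.
  replace ((Re w / (Re w * Re w + Im w * Im w) * Re w - - Im w / (Re w * Re w + Im w * Im w) * Im w) *
   (Re w / (Re w * Re w + Im w * Im w) * Re w - - Im w / (Re w * Re w + Im w * Im w) * Im w) +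
   (Re w / (Re w * Re w + Im w * Im w) * Im w + - Im w / (Re w * Re w + Im w * Im w) * Re w) *
   (Re w / (Re w * Re w + Im w * Im w) * Im w + - Im w / (Re w * Re w + Im w * Im w) * Re w))
   with 1 by (field; exact Hd).
  apply sqrt_1. }
apply (Rmult_eq_reg_r (Cmod w)); [|lra]. rewrite E. field. lra.
Qed.

Lemma Cmod_sub_rev z w : Cmod z - Cmod w <= Cmod (Cadd z w).
Proof.
assert (Hz : z = Cadd (Cadd z w) (Copp w)) by (apply C_ext; simpl; ring).
pose proof (Cmod_add (Cadd z w) (Copp w)). rewrite <- Hz, Cmod_opp in H. lra.
Qed.

Lemma Csum_bound n (f : nat -> C) c :
  (forall j, (j < n)%nat -> Cmod (f j) <= c) -> Cmod (Csum n f) <= INR n * c.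
Proof.
induction n as [|n IH]; intros H.
- simpl. rewrite Cmod_C0; lra.
- change (Csum (S n) f) with (Cadd (Csum n f) (f n)).
  eapply Rle_trans; [apply Cmod_add|].
  rewrite S_INR. assert (Cmod (Csum n f) <= INR n * c) by (apply IH; intros; apply H; lia).
  assert (Cmod (f n) <= c) by (apply H; lia). lra.
Qed.

Lemma Csum_shift m (f : nat -> C) : Csum (S m) f = Cadd (f O) (Csum m (fun j => f (S j))).
Proof.
induction m as [|m IH].
- simpl. apply C_ext; simpl; ring.
- change (Csum (S (S m)) f) with (Cadd (Csum (S m) f) (f (S m))). rewrite IH.
  apply C_ext; simpl; ring.
Qed.

Lemma Csum_sub n (f g : nat -> C) :
  Csub (Csum n f) (Csum n g) = Csum n (fun j => Csub (f j) (g j)).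
Proof.
induction n as [|n IH]; simpl.
- apply C_ext; simpl; ring.
- rewrite <- IH. apply C_ext; simpl; ring.
Qed.

Lemma idx_lt r i n : (i < n)%nat -> ((if (i <? r)%nat then i else S i) < S n)%nat.
Proof. intros H. destruct (i <? r)%nat; lia. Qed.

Lemma minor_bound n (A : cmat) K r c :
  (forall i j, (i < S n)%nat -> (j < S n)%nat -> Cmod (A i j) <= K) ->
  forall i j, (i < n)%nat -> (j < n)%nat -> Cmod (minor r c A i j) <= K.
Proof. intros H i j Hi Hj. unfold minor. apply H; apply idx_lt; auto. Qed.

Lemma det_bound n (A : cmat) K : 0 <= K ->
  (forall i j, (i < n)%nat -> (j < n)%nat -> Cmod (A i j) <= K) ->
  Cmod (det n A) <= INR (fact n) * K ^ n.
Proof.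
revert A. induction n as [|m IH]; intros A HK H.
- simpl. rewrite Cmod_C1. lra.
- change (det (S m) A) with (Csum (S m) (fun j => Cmul (sgn j) (Cmul (A O j) (det m (minor O j A))))).
  replace (INR (fact (S m)) * K ^ S m) with (INR (S m) * (K * (INR (fact m) * K ^ m))).
  2:{ rewrite fact_simpl, mult_INR. simpl. ring. }
  apply Csum_bound. intros j Hj.
  rewrite !Cmod_mul, Cmod_sgn.
  assert (H1 : Cmod (A O j) <= K) by (apply H; lia).
  assert (H2 : Cmod (det m (minor O j A)) <= INR (fact m) * K ^ m).
  { apply IH; auto. apply minor_bound. exact H. }
  pose proof (Cmod_ge0 (A O j)); pose proof (Cmod_ge0 (det m (minor O j A))).
  nra.
Qed.

Fixpoint Lip (n : nat) (K : R) : R :=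
  match n with O => 0 | S m => INR (S m) * (INR (fact m) * K ^ m + K * Lip m K) end.

Lemma Lip_ge0 n K : 0 <= K -> 0 <= Lip n K.
Proof.
intros HK. induction n as [|m IH]; [simpl; lra|].
change (Lip (S m) K) with (INR (S m) * (INR (fact m) * K ^ m + K * Lip m K)).
apply Rmult_le_pos; [apply pos_INR|].
pose proof (INR_fact_lt_0 m). pose proof (pow_le K m HK). nra.
Qed.

Lemma det_lip n (A B : cmat) K d : 0 <= K -> 0 <= d ->
  (forall i j, (i < n)%nat -> (j < n)%nat -> Cmod (A i j) <= K) ->
  (forall i j, (i < n)%nat -> (j < n)%nat -> Cmod (B i j) <= K) ->
  (forall i j, (i < n)%nat -> (j < n)%nat -> Cmod (Csub (A i j) (B i j)) <= d) ->
  Cmod (Csub (det n A) (det n B)) <= Lip n K * d.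
Proof.
revert A B. induction n as [|m IH]; intros A B HK Hd HA HB HAB.
- simpl. replace (Csub C1 C1) with C0 by (apply C_ext; simpl; ring). rewrite Cmod_C0; lra.
- change (det (S m) A) with (Csum (S m) (fun j => Cmul (sgn j) (Cmul (A O j) (det m (minor O j A))))).
  change (det (S m) B) with (Csum (S m) (fun j => Cmul (sgn j) (Cmul (B O j) (det m (minor O j B))))).
  rewrite Csum_sub.
  change (Lip (S m) K) with (INR (S m) * (INR (fact m) * K ^ m + K * Lip m K)).
  rewrite Rmult_assoc.
  apply Csum_bound. intros j Hj.
  set (dA := det m (minor O j A)). set (dB := det m (minor O j B)).
  replace (Csub (Cmul (sgn j) (Cmul (A O j) dA)) (Cmul (sgn j) (Cmul (B O j) dB)))
    with (Cmul (sgn j) (Cadd (Cmul (Csub (A O j) (B O j)) dA) (Cmul (B O j) (Csub dA dB))))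
    by (apply C_ext; simpl; ring).
  rewrite Cmod_mul, Cmod_sgn, Rmult_1_l.
  eapply Rle_trans; [apply Cmod_add|]. rewrite !Cmod_mul.
  assert (H1 : Cmod (Csub (A O j) (B O j)) <= d) by (apply HAB; lia).
  assert (H2 : Cmod dA <= INR (fact m) * K ^ m).
  { apply det_bound; auto. apply minor_bound. exact HA. }
  assert (H3 : Cmod (B O j) <= K) by (apply HB; lia).
  assert (H4 : Cmod (Csub dA dB) <= Lip m K * d).
  { apply IH; auto; intros; unfold minor; [apply HA|apply HB|apply HAB]; apply idx_lt; auto. }
  pose proof (Cmod_ge0 (Csub (A O j) (B O j))); pose proof (Cmod_ge0 dA);
  pose proof (Cmod_ge0 (B O j)); pose proof (Cmod_ge0 (Csub dA dB)).
  pose proof (INR_fact_lt_0 m). pose proof (pow_le K m HK).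
  nra.
Qed.

Fixpoint Cpow (z : C) (n : nat) : C := match n with O => C1 | S m => Cmul z (Cpow z m) end.

Lemma Cmod_pow z n : Cmod (Cpow z n) = Cmod z ^ n.
Proof. induction n as [|n IH]; simpl; [apply Cmod_C1| rewrite Cmod_mul, IH; ring]. Qed.

Fixpoint Eb (n : nat) (K x : R) : R :=
  match n with
  | O => 0
  | S m => (x + K) * Eb m K x + K * x ^ m + INR m * (K * (INR (fact m) * (K + x) ^ m))
  end.

Lemma Eb_ge0 n K x : 0 <= K -> 0 <= x -> 0 <= Eb n K x.
Proof.
intros HK Hx. induction n as [|m IH]; [simpl; lra|].
change (Eb (S m) K x) with ((x + K) * Eb m K x + K * x ^ m + INR m * (K * (INR (fact m) * (K + x) ^ m))).
pose proof (pow_le x m Hx). pose proof (pow_le (K + x) m ltac:(lra)).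
pose proof (INR_fact_lt_0 m). pose proof (pos_INR m).
assert (0 <= INR (fact m) * (K + x) ^ m) by nra.
assert (0 <= K * (INR (fact m) * (K + x) ^ m)) by nra.
nra.
Qed.

Lemma Bentry_bound (A : cmat) (lam : C) K i j :
  Cmod (A i j) <= K -> Cmod (Cadd (Cmul lam (delta i j)) (A i j)) <= Cmod lam + K.
Proof.
intros H. eapply Rle_trans; [apply Cmod_add|]. rewrite Cmod_mul.
pose proof (Cmod_delta i j). pose proof (Cmod_ge0 lam). nra.
Qed.

Lemma det_lead n (A : cmat) (lam : C) K : 0 <= K ->
  (forall i j, (i < n)%nat -> (j < n)%nat -> Cmod (A i j) <= K) ->
  Cmod (Csub (det n (fun i j => Cadd (Cmul lam (delta i j)) (A i j))) (Cpow lam n))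
    <= Eb n K (Cmod lam).
Proof.
revert A. induction n as [|m IH]; intros A HK H.
- simpl. replace (Csub C1 C1) with C0 by (apply C_ext; simpl; ring). rewrite Cmod_C0; lra.
- set (B := fun i j => Cadd (Cmul lam (delta i j)) (A i j)).
  set (x := Cmod lam).
  assert (Hx : 0 <= x) by apply Cmod_ge0.
  change (det (S m) B) with (Csum (S m) (fun j => Cmul (sgn j) (Cmul (B O j) (det m (minor O j B))))).
  rewrite Csum_shift.
  assert (Hd : Cmod (Csub (det m (minor O O B)) (Cpow lam m)) <= Eb m K x).
  { change (minor O O B) with (fun i j => Cadd (Cmul lam (delta i j)) (A (S i) (S j))).
    apply IH; auto. intros; apply H; lia. }
  assert (HR : Cmod (Csum m (fun j => Cmul (sgn (S j)) (Cmul (B O (S j)) (det m (minor O (S j) B)))))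
               <= INR m * (K * (INR (fact m) * (K + x) ^ m))).
  { apply Csum_bound. intros j Hj. rewrite !Cmod_mul, Cmod_sgn, Rmult_1_l.
    assert (H1 : Cmod (B O (S j)) <= K).
    { unfold B. eapply Rle_trans; [apply Cmod_add|]. rewrite Cmod_mul.
      unfold delta; simpl. rewrite Cmod_C0. assert (Cmod (A O (S j)) <= K) by (apply H; lia). lra. }
    assert (H2 : Cmod (det m (minor O (S j) B)) <= INR (fact m) * (K + x) ^ m).
    { apply det_bound; [lra|]. apply minor_bound. intros i k Hi Hk. unfold B.
      eapply Rle_trans; [apply Bentry_bound; apply H; auto| unfold x; lra]. }
    pose proof (Cmod_ge0 (B O (S j))). pose proof (Cmod_ge0 (det m (minor O (S j) B))).
    pose proof (pow_le (K + x) m ltac:(lra)). pose proof (INR_fact_lt_0 m). nra. }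
  assert (H00 : Cmod (A O O) <= K) by (apply H; lia).
  generalize dependent (Csum m (fun j => Cmul (sgn (S j)) (Cmul (B O (S j)) (det m (minor O (S j) B))))).
  generalize dependent (det m (minor O O B)).
  intros d Hd Rest HR.
  replace (Csub (Cadd (Cmul (sgn 0) (Cmul (B O O) d)) Rest) (Cpow lam (S m)))
    with (Cadd (Cadd (Cmul lam (Csub d (Cpow lam m)))
                     (Cadd (Cmul (A O O) (Cpow lam m)) (Cmul (A O O) (Csub d (Cpow lam m))))) Rest)
    by (apply C_ext; unfold B; simpl; ring).
  change (Eb (S m) K x) with ((x + K) * Eb m K x + K * x ^ m + INR m * (K * (INR (fact m) * (K + x) ^ m))).
  eapply Rle_trans; [apply Cmod_add|].
  eapply Rle_trans; [apply Rplus_le_compat_r; apply Cmod_add|].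
  eapply Rle_trans; [apply Rplus_le_compat_r; apply Rplus_le_compat_l; apply Cmod_add|].
  rewrite !Cmod_mul, Cmod_pow. fold x.
  pose proof (Cmod_ge0 (A O O)). pose proof (Cmod_ge0 (Csub d (Cpow lam m))).
  pose proof (pow_le x m Hx).
  nra.
Qed.

Fixpoint CE (n : nat) (K : R) : R :=
  match n with O => 0 | S m => CE m K + K + INR m * K * INR (fact m) end.

Lemma CE_ge0 n K : 0 <= K -> 0 <= CE n K.
Proof.
intros HK; induction n as [|m IH]; [simpl; lra|].
change (CE (S m) K) with (CE m K + K + INR m * K * INR (fact m)).
pose proof (pos_INR m). pose proof (INR_fact_lt_0 m). assert (0 <= INR m * K) by nra. nra.
Qed.

Lemma Eb_bound m K x : 0 <= K -> 0 <= x -> Eb (S m) K x <= CE (S m) K * (1 + K + x) ^ m.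
Proof.
intros HK Hx. induction m as [|m IH].
- simpl. lra.
- set (Q := 1 + K + x).
  change (Eb (S (S m)) K x) with ((x + K) * Eb (S m) K x + K * x ^ (S m)
        + INR (S m) * (K * (INR (fact (S m)) * (K + x) ^ (S m)))).
  change (CE (S (S m)) K) with (CE (S m) K + K + INR (S m) * K * INR (fact (S m))).
  fold Q in IH.
  assert (HQ : 0 <= Q) by (unfold Q; lra).
  pose proof (pow_le Q m HQ) as Qm.
  assert (P1 : x ^ S m <= Q ^ S m) by (apply pow_incr; unfold Q; lra).
  assert (P2 : (K + x) ^ S m <= Q ^ S m) by (apply pow_incr; unfold Q; lra).
  pose proof (Eb_ge0 (S m) K x HK Hx).
  pose proof (CE_ge0 (S m) K HK).
  pose proof (pos_INR (S m)). pose proof (INR_fact_lt_0 (S m)).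
  pose proof (pow_le (K + x) (S m) ltac:(lra)).
  assert (E : Q ^ S m = Q * Q ^ m) by reflexivity.
  assert (T1 : (x + K) * Eb (S m) K x <= Q * (CE (S m) K * Q ^ m)).
  { apply Rmult_le_compat; try lra. unfold Q; lra. }
  assert (T2 : K * x ^ S m <= K * Q ^ S m) by (apply Rmult_le_compat_l; lra).
  assert (T3 : INR (S m) * (K * (INR (fact (S m)) * (K + x) ^ S m))
               <= INR (S m) * K * INR (fact (S m)) * Q ^ S m).
  { replace (INR (S m) * (K * (INR (fact (S m)) * (K + x) ^ S m)))
      with (INR (S m) * K * INR (fact (S m)) * (K + x) ^ S m) by ring.
    apply Rmult_le_compat_l; auto.
    assert (0 <= INR (S m) * K) by nra. nra. }
  rewrite E in *. nra.
Qed.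

Lemma cont_lim f D x : continuity_pt f x -> limit1_in f D (f x) x.
Proof.
intros H eps He. destruct (H eps He) as [alp [Ha Hb]]. exists alp; split; auto.
intros y [Dy dy]. destruct (Req_dec y x) as [->|Hne].
- simpl. rewrite R_dist_eq. lra.
- apply Hb. split; auto. split; [exact I| auto].
Qed.

Lemma in_CN_fun N tau (g : R -> R) j :
  (forall x, continuity_pt g x) -> in_CN N tau (fun t k => if (k =? j)%nat then g t else 0).
Proof.
intros Hg k Hk x Hx. destruct (k =? j)%nat.
- apply (cont_lim g). apply Hg.
- exact (limit_free (fun _ => 0) _ x x).
Qed.

Lemma in_CN_add N tau f g : in_CN N tau f -> in_CN N tau g -> in_CN N tau (fun t k => f t k + g t k).
Proof.
intros Hf Hg k Hk x Hx. apply (limit_plus (fun t => f t k) (fun t => g t k)); [apply Hf|apply Hg]; auto.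
Qed.

Lemma in_CN_scal N tau (c : R) f : in_CN N tau f -> in_CN N tau (fun t k => c * f t k).
Proof.
intros Hf k Hk x Hx. apply (limit_mul (fun _ => c) (fun t => f t k)).
- exact (limit_free (fun _ => c) _ x x).
- apply Hf; auto.
Qed.

Lemma L_diff N tau L f g i : bounded_linear N tau L -> in_CN N tau f -> in_CN N tau g -> (i < N)%nat ->
  L f i - L g i = L (fun t k => f t k + -1 * g t k) i.
Proof.
intros [Hadd [Hscal _]] Hf Hg Hi.
pose proof (Hadd f (fun t k => -1 * g t k) Hf (in_CN_scal N tau (-1) g Hg) i Hi) as E1.
simpl in E1. rewrite E1. rewrite (Hscal (-1) g Hg i Hi). ring.
Qed.

Definition fre (a c : R) (j : nat) : R -> nat -> R :=
  fun t k => if (k =? j)%nat then exp (a * t) * cos (c * t) else 0.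
Definition fim (a c : R) (j : nat) : R -> nat -> R :=
  fun t k => if (k =? j)%nat then exp (a * t) * sin (c * t) else 0.

Lemma Lexp_E L b y i j : Lexp L (mkC b y) i j = mkC (L (fre b y j) i) (L (fim b y j) i).
Proof. reflexivity. Qed.

Lemma fre_CN N tau a c j : in_CN N tau (fre a c j).
Proof. apply in_CN_fun. intros x. reg. Qed.
Lemma fim_CN N tau a c j : in_CN N tau (fim a c j).
Proof. apply in_CN_fun. intros x. reg. Qed.

Lemma exp_bound b tau t : 0 <= tau -> - tau <= t <= 0 -> exp (b * t) <= exp (Rabs b * tau).
Proof.
intros Ht Hr. assert (b * t <= Rabs b * tau).
{ destruct (Rcase_abs b) as [Hb|Hb]; [rewrite Rabs_left by lra| rewrite Rabs_right by lra]; nra. }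
destruct (Rle_lt_or_eq_dec _ _ H) as [Hl|He]; [left; apply exp_increasing; auto| rewrite He; lra].
Qed.



Lemma L_bound N tau L M f c i : (forall f (c : R), in_CN N tau f ->
      (forall t k, - tau <= t <= 0 -> (k < N)%nat -> Rabs (f t k) <= c) ->
      forall i, (i < N)%nat -> Rabs (L f i) <= M * c) ->
  in_CN N tau f -> 0 <= c ->
  (forall t k, - tau <= t <= 0 -> (k < N)%nat -> Rabs (f t k) <= c) -> (i < N)%nat ->
  Rabs (L f i) <= Rabs M * c.
Proof.
intros HM Hf Hc Hb Hi. eapply Rle_trans; [apply (HM f c Hf Hb i Hi)|].
apply Rmult_le_compat_r; auto. apply RRle_abs.
Qed.

Lemma cos_lip u v : Rabs (cos u - cos v) <= Rabs (u - v).
Proof.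
destruct (MVT_abs cos (fun x => - sin x) v u) as [c [Hc _]].
{ intros; apply derivable_pt_lim_cos. }
rewrite Hc. rewrite Rabs_Ropp. pose proof (SIN_bound c).
assert (Rabs (sin c) <= 1) by (apply Rabs_le; lra).
pose proof (Rabs_pos (u - v)). nra.
Qed.

Lemma sin_lip u v : Rabs (sin u - sin v) <= Rabs (u - v).
Proof.
destruct (MVT_abs sin cos v u) as [c [Hc _]].
{ intros; apply derivable_pt_lim_sin. }
rewrite Hc. pose proof (COS_bound c).
assert (Rabs (cos c) <= 1) by (apply Rabs_le; lra).
pose proof (Rabs_pos (u - v)). nra.
Qed.

Definition Lbnd (N : nat) (tau : R) (L : (R -> nat -> R) -> nat -> R) (M : R) : Prop :=
  forall f (c : R), in_CN N tau f ->
      (forall t k, - tau <= t <= 0 -> (k < N)%nat -> Rabs (f t k) <= c) ->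
      forall i, (i < N)%nat -> Rabs (L f i) <= M * c.

Lemma trig_exp_bound (b c t tau w : R) : 0 <= tau -> - tau <= t <= 0 -> Rabs w <= 1 ->
  Rabs (exp (b * t) * w) <= exp (Rabs b * tau).
Proof.
intros Ht Hr Hw. rewrite Rabs_mult, (Rabs_pos_eq (exp _)) by (left; apply exp_pos).
pose proof (exp_bound b tau t Ht Hr). pose proof (exp_pos (b * t)). pose proof (Rabs_pos w). nra.
Qed.

Lemma Lexp_bound N tau L M b y i j : 0 <= tau -> Lbnd N tau L M -> (i < N)%nat ->
  Cmod (Lexp L (mkC b y) i j) <= 2 * (Rabs M * exp (Rabs b * tau)).
Proof.
intros Ht HM Hi. rewrite Lexp_E. eapply Rle_trans; [apply Cmod_ReIm|]. simpl.
assert (Hc : 0 <= exp (Rabs b * tau)) by (left; apply exp_pos).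
assert (H1 : Rabs (L (fre b y j) i) <= Rabs M * exp (Rabs b * tau)).
{ apply (L_bound N tau L M); auto. apply fre_CN.
  intros t k Htk Hk. unfold fre. destruct (k =? j)%nat.
  - apply trig_exp_bound; auto. apply Rabs_le. apply COS_bound.
  - rewrite Rabs_R0; lra. }
assert (H2 : Rabs (L (fim b y j) i) <= Rabs M * exp (Rabs b * tau)).
{ apply (L_bound N tau L M); auto. apply fim_CN.
  intros t k Htk Hk. unfold fim. destruct (k =? j)%nat.
  - apply trig_exp_bound; auto. apply Rabs_le. apply SIN_bound.
  - rewrite Rabs_R0; lra. }
lra.
Qed.

Lemma diff_bound (b t tau y y' w w' : R) : 0 <= tau -> - tau <= t <= 0 ->
  Rabs (w - w') <= Rabs (y * t - y' * t) ->
  Rabs (exp (b * t) * w + -1 * (exp (b * t) * w')) <= exp (Rabs b * tau) * tau * Rabs (y - y').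
Proof.
intros Ht Hr Hw.
replace (exp (b * t) * w + -1 * (exp (b * t) * w')) with (exp (b * t) * (w - w')) by ring.
rewrite Rabs_mult, (Rabs_pos_eq (exp _)) by (left; apply exp_pos).
replace (y * t - y' * t) with ((y - y') * t) in Hw by ring.
rewrite Rabs_mult in Hw.
assert (Rabs t <= tau) by (apply Rabs_le; lra).
pose proof (exp_bound b tau t Ht Hr). pose proof (exp_pos (b * t)).
pose proof (Rabs_pos (y - y')). pose proof (Rabs_pos t). pose proof (Rabs_pos (w - w')).
assert (Rabs (w - w') <= Rabs (y - y') * tau) by nra.
assert (exp (b * t) * Rabs (w - w') <= exp (b * t) * (Rabs (y - y') * tau)) by nra.
assert (exp (b * t) * (Rabs (y - y') * tau) <= exp (Rabs b * tau) * (Rabs (y - y') * tau)) by nra.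
nra.
Qed.

Lemma Lexp_lip N tau L M b y y' i j : 0 <= tau -> bounded_linear N tau L -> Lbnd N tau L M ->
  (i < N)%nat ->
  Cmod (Csub (Lexp L (mkC b y) i j) (Lexp L (mkC b y') i j))
    <= 2 * (Rabs M * (exp (Rabs b * tau) * tau)) * Rabs (y - y').
Proof.
intros Ht hL HM Hi. rewrite !Lexp_E. eapply Rle_trans; [apply Cmod_ReIm|]. simpl.
assert (Hc : 0 <= exp (Rabs b * tau) * tau * Rabs (y - y')).
{ pose proof (exp_pos (Rabs b * tau)). pose proof (Rabs_pos (y - y')). apply Rmult_le_pos; [nra|auto]. }
assert (H1 : Rabs (L (fre b y j) i + - L (fre b y' j) i) <= Rabs M * (exp (Rabs b * tau) * tau * Rabs (y - y'))).
{ change (L (fre b y j) i + - L (fre b y' j) i) with (L (fre b y j) i - L (fre b y' j) i).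
  rewrite (L_diff N tau L) by (auto; apply fre_CN).
  apply (L_bound N tau L M); auto.
  - apply in_CN_add; [apply fre_CN| apply in_CN_scal; apply fre_CN].
  - intros t k Htk Hk. unfold fre. destruct (k =? j)%nat.
    + apply diff_bound; auto. apply cos_lip.
    + replace (0 + -1 * 0) with 0 by ring. rewrite Rabs_R0; lra. }
assert (H2 : Rabs (L (fim b y j) i + - L (fim b y' j) i) <= Rabs M * (exp (Rabs b * tau) * tau * Rabs (y - y'))).
{ change (L (fim b y j) i + - L (fim b y' j) i) with (L (fim b y j) i - L (fim b y' j) i).
  rewrite (L_diff N tau L) by (auto; apply fim_CN).
  apply (L_bound N tau L M); auto.
  - apply in_CN_add; [apply fim_CN| apply in_CN_scal; apply fim_CN].
  - intros t k Htk Hk. unfold fim. destruct (k =? j)%nat.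
    + apply diff_bound; auto. apply sin_lip.
    + replace (0 + -1 * 0) with 0 by ring. rewrite Rabs_R0; lra. }
replace (2 * (Rabs M * (exp (Rabs b * tau) * tau)) * Rabs (y - y'))
  with (Rabs M * (exp (Rabs b * tau) * tau * Rabs (y - y')) + Rabs M * (exp (Rabs b * tau) * tau * Rabs (y - y'))) by ring.
lra.
Qed.

Definition lamE (eps : R) (s : C) : C := Csub (Cmul (RtoC (eps * eps)) (Cmul s s)) s.
Definition muE (eps : R) (s : C) : C := Csub (Cmul (RtoC (eps * eps)) s) C1.

Lemma DeltaE_E L eps s i j : DeltaE L eps s i j = Cadd (Cmul (lamE eps s) (delta i j)) (Lexp L s i j).
Proof. reflexivity. Qed.

Lemma Cmod_mkC_le b y : Cmod (mkC b y) <= Rabs b + Rabs y.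
Proof. apply Cmod_ReIm. Qed.

Lemma Cmod_mkC_ge b y : Rabs y <= Cmod (mkC b y).
Proof. apply (Cmod_Im (mkC b y)). Qed.

Lemma lam_mu eps s : lamE eps s = Cmul s (muE eps s).
Proof. apply C_ext; unfold lamE, muE; simpl; ring. Qed.

Lemma mu_upper eps s : 0 <= eps -> Cmod (muE eps s) <= eps * eps * Cmod s + 1.
Proof.
intros He. unfold muE. eapply Rle_trans; [apply Cmod_sub|].
rewrite Cmod_mul, Cmod_RtoC, Cmod_C1, Rabs_pos_eq by nra. lra.
Qed.

Lemma mu_lower eps b y : 0 <= eps <= 1 -> eps * eps * Rabs b <= 1/2 ->
  1 + eps * eps * Cmod (mkC b y) <= 5 * Cmod (muE eps (mkC b y)).
Proof.
intros He Hb. set (u := eps * eps) in *.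
assert (Hu : 0 <= u) by (unfold u; nra).
assert (Hs : 1 + u * Cmod (mkC b y) <= 3/2 + u * Rabs y).
{ pose proof (Cmod_mkC_le b y).
  assert (u * Cmod (mkC b y) <= u * (Rabs b + Rabs y)) by (apply Rmult_le_compat_l; auto). nra. }
assert (Hm : (3/2 + u * Rabs y) / 5 <= Cmod (muE eps (mkC b y))).
{ unfold Cmod. apply le_sqrt_of_sq.
  - pose proof (Rabs_pos y). nra.
  - unfold muE; simpl. fold u.
    assert (Hub : Rabs (u * b) <= 1/2) by (rewrite Rabs_mult, (Rabs_pos_eq u Hu); lra).
    assert (Hyy : Rabs y * Rabs y = y * y) by (rewrite <- Rabs_mult; apply Rabs_pos_eq; nra).
    assert (H2 : u * b <= 1/2) by (pose proof (RRle_abs (u * b)); lra).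
    pose proof (Rabs_pos y).
    match goal with |- _ <= ?R => assert (E : R = (u * b - 1) * (u * b - 1) + (u * Rabs y) * (u * Rabs y)) by (replace ((u * Rabs y) * (u * Rabs y)) with (u * u * (Rabs y * Rabs y)) by ring; rewrite Hyy; ring) end.
    rewrite E. set (v := u * Rabs y).
    assert (0 <= v) by (unfold v; nra).
    assert (1/4 <= (u * b - 1) * (u * b - 1)) by nra.
    nra. }
lra.
Qed.

Lemma lam_lower eps b y : 0 <= eps <= 1 -> eps * eps * Rabs b <= 1/2 ->
  Cmod (mkC b y) * (1 + eps * eps * Cmod (mkC b y)) <= 5 * Cmod (lamE eps (mkC b y)).
Proof.
intros He Hb. rewrite lam_mu, Cmod_mul. pose proof (mu_lower eps b y He Hb).
pose proof (Cmod_ge0 (mkC b y)). nra.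
Qed.

Lemma div_le (x a d R : R) : 0 < d -> x * a <= R * d -> x * (a / d) <= R.
Proof.
intros Hd H. replace (x * (a / d)) with ((x * a) / d) by (field; lra).
apply (Rmult_le_reg_r d); auto. replace (x * a / d * d) with (x * a) by (field; lra). lra.
Qed.

Lemma inv_cof_bound m (B : cmat) i j K : 0 <= K -> (i < S m)%nat -> (j < S m)%nat ->
  det (S m) B <> C0 ->
  (forall i j, (i < S m)%nat -> (j < S m)%nat -> Cmod (B i j) <= K) ->
  Cmod (inv (S m) B i j) = Cmod (det m (minor j i B)) / Cmod (det (S m) B) /\
  Cmod (det m (minor j i B)) <= INR (fact m) * K ^ m.
Proof.
intros HK Hi Hj Hd H. split.
- unfold inv. rewrite Cmod_div by auto. rewrite Cmod_mul, Cmod_sgn, Rmult_1_l. reflexivity.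
- apply det_bound; auto. apply minor_bound. exact H.
Qed.

Lemma large_bound m K0 (A : cmat) (lam : C) i j : 0 <= K0 ->
  (forall i j, (i < S m)%nat -> (j < S m)%nat -> Cmod (A i j) <= K0) ->
  1 + K0 + 2 * CE (S m) K0 * 2 ^ m <= Cmod lam ->
  (i < S m)%nat -> (j < S m)%nat ->
  det (S m) (fun i j => Cadd (Cmul lam (delta i j)) (A i j)) <> C0 /\
  Cmod lam * Cmod (inv (S m) (fun i j => Cadd (Cmul lam (delta i j)) (A i j)) i j)
    <= 2 ^ (S m) * INR (fact m).
Proof.
intros HK HA Hx Hi Hj.
set (B := fun i j => Cadd (Cmul lam (delta i j)) (A i j)).
set (x := Cmod lam) in *.
pose proof (CE_ge0 (S m) K0 HK) as HCE.
assert (Hx1 : 1 <= x).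
{ pose proof (pow_le 2 m ltac:(lra)). nra. }
assert (HQ : 1 + K0 + x <= 2 * x) by (pose proof (pow_le 2 m ltac:(lra)); nra).
assert (Hxm : 0 < x ^ m) by (apply pow_lt; lra).
assert (HQm : (1 + K0 + x) ^ m <= 2 ^ m * x ^ m).
{ rewrite <- Rpow_mult_distr. apply pow_incr. lra. }
assert (HE : Cmod (Csub (det (S m) B) (Cpow lam (S m))) <= CE (S m) K0 * (2 ^ m * x ^ m)).
{ pose proof (det_lead (S m) A lam K0 HK HA) as T1.
  change (fun i j => Cadd (Cmul lam (delta i j)) (A i j)) with B in T1.
  change (Cmod lam) with x in T1.
  pose proof (Eb_bound m K0 x HK ltac:(apply Cmod_ge0)) as T2.
  assert (CE (S m) K0 * (1 + K0 + x) ^ m <= CE (S m) K0 * (2 ^ m * x ^ m))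
    by (apply Rmult_le_compat_l; auto).
  lra. }
assert (Hdet : x ^ S m / 2 <= Cmod (det (S m) B)).
{ assert (Ep : Cpow lam (S m) = Cadd (det (S m) B) (Copp (Csub (det (S m) B) (Cpow lam (S m)))))
    by (apply C_ext; simpl; ring).
  pose proof (Cmod_add (det (S m) B) (Copp (Csub (det (S m) B) (Cpow lam (S m))))) as T.
  rewrite <- Ep, Cmod_opp, Cmod_pow in T. fold x in T.
  assert (x ^ S m = x * x ^ m) by reflexivity.
  assert (CE (S m) K0 * (2 ^ m * x ^ m) <= x / 2 * x ^ m).
  { replace (CE (S m) K0 * (2 ^ m * x ^ m)) with ((CE (S m) K0 * 2 ^ m) * x ^ m) by ring.
    apply Rmult_le_compat_r; lra. }
  nra. }
assert (Hdpos : 0 < Cmod (det (S m) B)) by (pose proof (pow_lt x (S m) ltac:(lra)); lra).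
assert (Hdnz : det (S m) B <> C0).
{ intros E. rewrite E, Cmod_C0 in Hdpos. lra. }
split; auto.
assert (HB : forall i j, (i < S m)%nat -> (j < S m)%nat -> Cmod (B i j) <= x + K0).
{ intros; unfold B; apply Bentry_bound; auto. }
destruct (inv_cof_bound m B i j (x + K0) ltac:(pose proof (Cmod_ge0 lam); lra) Hi Hj Hdnz HB) as [E1 E2].
rewrite E1. apply div_le; auto.
assert (H3 : (x + K0) ^ m <= 2 ^ m * x ^ m).
{ eapply Rle_trans; [|exact HQm]. apply pow_incr. split; [pose proof (Cmod_ge0 lam); lra| lra]. }
pose proof (INR_fact_lt_0 m).
assert (H4 : Cmod (det m (minor j i B)) <= INR (fact m) * (2 ^ m * x ^ m)).
{ eapply Rle_trans; [exact E2|]. apply Rmult_le_compat_l; lra. }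
assert (x ^ S m = x * x ^ m) by reflexivity.
assert (2 ^ S m = 2 * 2 ^ m) by reflexivity.
pose proof (pow_le 2 m ltac:(lra)).
assert (x * Cmod (det m (minor j i B)) <= x * (INR (fact m) * (2 ^ m * x ^ m))) by (apply Rmult_le_compat_l; lra).
assert (0 <= 2 ^ S m * INR (fact m)) by nra.
assert (2 ^ S m * INR (fact m) * (x ^ S m / 2) <= 2 ^ S m * INR (fact m) * Cmod (det (S m) B))
  by (apply Rmult_le_compat_l; lra).
assert (E3 : 2 ^ S m * INR (fact m) * (x ^ S m / 2) = x * (INR (fact m) * (2 ^ m * x ^ m))).
{ rewrite H1, H0. field. }
lra.
Qed.

Lemma small_bound m (B : cmat) i j K d : 0 <= K -> 0 < d -> (i < S m)%nat -> (j < S m)%nat ->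
  d <= Cmod (det (S m) B) ->
  (forall i j, (i < S m)%nat -> (j < S m)%nat -> Cmod (B i j) <= K) ->
  Cmod (inv (S m) B i j) <= INR (fact m) * K ^ m / d.
Proof.
intros HK Hd Hi Hj Hdet H.
assert (Hdnz : det (S m) B <> C0).
{ intros E. rewrite E, Cmod_C0 in Hdet. lra. }
destruct (inv_cof_bound m B i j K HK Hi Hj Hdnz H) as [E1 E2].
rewrite E1. unfold Rdiv.
apply Rmult_le_compat; auto.
- apply Cmod_ge0.
- left; apply Rinv_0_lt_compat. lra.
- apply Rinv_le_contravar; auto.
Qed.

Lemma Cmod_dist a c : Rabs (Cmod a - Cmod c) <= Cmod (Csub a c).
Proof.
apply Rabs_le. split.
- pose proof (Cmod_sub_rev c (Copp a)). rewrite Cmod_opp in H.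
  replace (Cadd c (Copp a)) with (Copp (Csub a c)) in H by (apply C_ext; simpl; ring).
  rewrite Cmod_opp in H. lra.
- pose proof (Cmod_sub_rev a (Copp c)). rewrite Cmod_opp in H. unfold Csub. lra.
Qed.

Lemma lamE0 s : lamE 0 s = Copp s.
Proof. apply C_ext; unfold lamE; simpl; ring. Qed.

Lemma Delta_entry_bound N tau L M eps b y i j : 0 <= tau -> Lbnd N tau L M -> 0 <= eps <= 1 ->
  (i < N)%nat ->
  Cmod (DeltaE L eps (mkC b y) i j)
    <= Cmod (mkC b y) * Cmod (mkC b y) + Cmod (mkC b y) + 2 * (Rabs M * exp (Rabs b * tau)).
Proof.
intros Ht HM He Hi. rewrite DeltaE_E.
eapply Rle_trans; [apply Bentry_bound; apply (Lexp_bound N tau L M b y i j); auto|].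
apply Rplus_le_compat_r.
unfold lamE. eapply Rle_trans; [apply Cmod_sub|].
rewrite !Cmod_mul, Cmod_RtoC, Rabs_pos_eq by nra.
pose proof (Cmod_ge0 (mkC b y)).
assert (eps * eps <= 1) by nra. nra.
Qed.

Lemma det0_cont N tau L M b : 0 <= tau -> bounded_linear N tau L -> Lbnd N tau L M ->
  forall c, continuity_pt (fun y => Cmod (det N (DeltaE L 0 (mkC b y)))) c.
Proof.
intros Ht hL HM c eps He.
set (K0 := 2 * (Rabs M * exp (Rabs b * tau))).
set (K1 := 2 * (Rabs M * (exp (Rabs b * tau) * tau))).
assert (HK0 : 0 <= K0) by (unfold K0; repeat apply Rmult_le_pos; try lra; try apply Rabs_pos; left; apply exp_pos).
assert (HK1 : 0 <= K1) by (unfold K1; repeat apply Rmult_le_pos; try lra; try apply Rabs_pos; left; apply exp_pos).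
set (S1 := Rabs b + Rabs c + 1).
set (K3 := S1 * S1 + S1 + K0).
assert (HS1 : 0 <= S1) by (unfold S1; pose proof (Rabs_pos b); pose proof (Rabs_pos c); lra).
assert (HK3 : 0 <= K3) by (unfold K3; nra).
set (Lp := Lip N K3 * (1 + K1)).
assert (HLp : 0 <= Lp) by (unfold Lp; pose proof (Lip_ge0 N K3 HK3); nra).
exists (Rmin 1 (eps / (Lp + 1))). split.
{ apply Rmin_glb_lt; [lra|]. apply Rdiv_lt_0_compat; lra. }
intros y [_ Hy]. simpl in Hy |- *. unfold R_dist in *.
assert (Hy1 : Rabs (y - c) < 1) by (eapply Rlt_le_trans; [exact Hy| apply Rmin_l]).
assert (Hy2 : Rabs (y - c) < eps / (Lp + 1)) by (eapply Rlt_le_trans; [exact Hy| apply Rmin_r]).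
assert (Hsy : Cmod (mkC b y) <= S1).
{ eapply Rle_trans; [apply Cmod_mkC_le|]. unfold S1.
  pose proof (Rabs_triang_inv y c). pose proof (Rabs_triang_inv c y).
  rewrite Rabs_minus_sym in H0. lra. }
assert (Hsc : Cmod (mkC b c) <= S1).
{ eapply Rle_trans; [apply Cmod_mkC_le|]. unfold S1. lra. }
eapply Rle_lt_trans; [apply Cmod_dist|].
eapply Rle_lt_trans.
{ apply (det_lip N _ _ K3 ((1 + K1) * Rabs (y - c))); auto.
  - pose proof (Rabs_pos (y - c)); nra.
  - intros i j Hi Hj. eapply Rle_trans; [apply (Delta_entry_bound N tau L M); auto; lra|].
    fold K0. unfold K3. pose proof (Cmod_ge0 (mkC b y)). nra.
  - intros i j Hi Hj. eapply Rle_trans; [apply (Delta_entry_bound N tau L M); auto; lra|].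
    fold K0. unfold K3. pose proof (Cmod_ge0 (mkC b c)). nra.
  - intros i j Hi Hj. rewrite !DeltaE_E.
    replace (Csub (Cadd (Cmul (lamE 0 (mkC b y)) (delta i j)) (Lexp L (mkC b y) i j))
                  (Cadd (Cmul (lamE 0 (mkC b c)) (delta i j)) (Lexp L (mkC b c) i j)))
      with (Cadd (Cmul (mkC 0 (- (y - c))) (delta i j)) (Csub (Lexp L (mkC b y) i j) (Lexp L (mkC b c) i j)))
      by (apply C_ext; unfold lamE; simpl; ring).
    eapply Rle_trans; [apply Cmod_add|]. rewrite Cmod_mul.
    pose proof (Cmod_delta i j).
    assert (Cmod (mkC 0 (- (y - c))) <= Rabs (y - c)).
    { eapply Rle_trans; [apply Cmod_ReIm|]. simpl. rewrite Rabs_R0, Rabs_Ropp. lra. }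
    pose proof (Lexp_lip N tau L M b y c i j Ht hL HM Hi). fold K1 in H1.
    pose proof (Cmod_ge0 (mkC 0 (- (y - c)))). pose proof (Cmod_ge0 (delta i j)).
    assert (Cmod (mkC 0 (- (y - c))) * Cmod (delta i j) <= Rabs (y - c)) by nra.
    nra. }
fold Lp.
replace (Lip N K3 * ((1 + K1) * Rabs (y - c))) with (Lp * Rabs (y - c)) by (unfold Lp; ring).
assert (Lp * Rabs (y - c) <= Lp * (eps / (Lp + 1))) by (apply Rmult_le_compat_l; lra).
assert (Lp * (eps / (Lp + 1)) < eps).
{ apply (Rmult_lt_reg_r (Lp + 1)); [lra|].
  replace (Lp * (eps / (Lp + 1)) * (Lp + 1)) with (Lp * eps) by (field; lra). nra. }
lra.
Qed.

Lemma Cmod_mkC_pos_le b y : Rabs y <= Cmod (mkC b y).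
Proof. apply Cmod_mkC_ge. Qed.

Theorem lemma4p2 (N : nat) (tau : R) (L : (R -> nat -> R) -> nat -> R)
  (htau : 0 <= tau) (hL : bounded_linear N tau L)
  (b eps0 : R) (heps0 : 0 < eps0 < 1)
  (hdet : forall eps y, 0 <= eps <= eps0 -> det N (DeltaE L eps (mkC b y)) <> C0) :
  exists eps1, 0 < eps1 <= eps0 /\
    (exists M, forall eps y, 0 <= eps <= eps1 -> forall i j, (i < N)%nat -> (j < N)%nat ->
        Cmod (mkC b y) * Cmod (inv N (DeltaE L eps (mkC b y)) i j) <= M) /\
    (exists M, forall eps y, 0 < eps <= eps1 -> forall i j, (i < 2 * N)%nat -> (j < 2 * N)%nat ->
        Cmod (mkC b y) * Cmod (inv (2 * N)%nat (Dmat N L eps (mkC b y)) i j) <= M).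
Proof.
pose proof hL as [_ [_ [M HM0]]].
assert (HM : Lbnd N tau L M) by exact HM0. clear HM0.
destruct N as [|m].
{ exists eps0. split; [lra|]. split; exists 0; intros; lia. }
set (N := S m) in *.
set (K0 := 2 * (Rabs M * exp (Rabs b * tau))).
assert (HK0 : 0 <= K0) by (unfold K0; repeat apply Rmult_le_pos; try lra; try apply Rabs_pos; left; apply exp_pos).
assert (HLx : forall y i j, (i < N)%nat -> Cmod (Lexp L (mkC b y) i j) <= K0).
{ intros; apply (Lexp_bound N tau L M); auto. }
pose proof (CE_ge0 N K0 HK0) as HCE.
pose proof (pow_le 2 m ltac:(lra)) as H2m.
set (R0 := 1 + K0 + 2 * CE N K0 * 2 ^ m).
assert (HR0 : 1 <= R0) by (unfold R0; nra).
set (Y0 := 5 * R0).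
set (eps2 := Rmin 1 (Rmin eps0 (/ (2 * (Rabs b + 1))))).
pose proof (Rabs_pos b) as Hb0.
assert (Heps2 : 0 < eps2 <= 1 /\ eps2 <= eps0 /\ eps2 <= / (2 * (Rabs b + 1))).
{ unfold eps2. split; [split|split].
  - apply Rmin_glb_lt; [lra|]. apply Rmin_glb_lt; [lra|]. apply Rinv_0_lt_compat; lra.
  - apply Rmin_l.
  - eapply Rle_trans; [apply Rmin_r| apply Rmin_l].
  - eapply Rle_trans; [apply Rmin_r| apply Rmin_r]. }
assert (Hsmall_b : forall eps, 0 <= eps <= eps2 -> eps * eps * Rabs b <= 1/2).
{ intros eps He.
  assert (eps * Rabs b <= / (2 * (Rabs b + 1)) * Rabs b) by (apply Rmult_le_compat_r; lra).
  assert (/ (2 * (Rabs b + 1)) * Rabs b <= 1/2).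
  { apply (Rmult_le_reg_l (2 * (Rabs b + 1))); [lra|].
    replace (2 * (Rabs b + 1) * (/ (2 * (Rabs b + 1)) * Rabs b)) with (Rabs b) by (field; lra). lra. }
  assert (eps * eps * Rabs b <= eps * Rabs b).
  { replace (eps * eps * Rabs b) with (eps * (eps * Rabs b)) by ring.
    assert (0 <= eps * Rabs b) by nra. nra. }
  lra. }
set (f := fun y => Cmod (det N (DeltaE L 0 (mkC b y)))).
destruct (continuity_ab_min f (- Y0) Y0) as [ymin [Hmin Hym]].
{ unfold Y0; lra. }
{ intros c _. apply (det0_cont N tau L M b); auto. }
set (m0 := f ymin).
assert (Hm0 : 0 < m0).
{ unfold m0, f. apply Cmod_nz. apply hdet. lra. }
set (S0 := Rabs b + Y0).
assert (HS0 : 0 <= S0) by (unfold S0, Y0; lra).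
set (K2 := S0 * S0 + S0 + K0).
assert (HK2 : 0 <= K2) by (unfold K2; nra).
pose proof (Lip_ge0 N K2 HK2) as HLip.
set (eps1 := Rmin eps2 (m0 / (2 * (Lip N K2 * (S0 * S0) + 1)))).
assert (HS02 : 0 <= Lip N K2 * (S0 * S0)) by nra.
assert (Heps1 : 0 < eps1 /\ eps1 <= eps2 /\ eps1 <= m0 / (2 * (Lip N K2 * (S0 * S0) + 1))).
{ unfold eps1. split; [|split; [apply Rmin_l| apply Rmin_r]].
  apply Rmin_glb_lt; [lra|]. apply Rdiv_lt_0_compat; lra. }
pose proof (INR_fact_lt_0 m) as Hfm.
set (B1 := 5 * (2 ^ N * INR (fact m))).
set (B2 := S0 * (1 + S0) * (INR (fact m) * K2 ^ m / (m0 / 2))).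
set (B := Rmax B1 B2).
assert (HB1 : 0 <= B1) by (unfold B1; pose proof (pow_le 2 N ltac:(lra)); nra).
assert (HB : 0 <= B) by (eapply Rle_trans; [exact HB1| apply Rmax_l]).
assert (KEY : forall eps y i j, 0 <= eps <= eps1 -> (i < N)%nat -> (j < N)%nat ->
   Cmod (mkC b y) * (1 + eps * eps * Cmod (mkC b y)) * Cmod (inv N (DeltaE L eps (mkC b y)) i j) <= B).
{ intros eps y i j He Hi Hj.
  assert (He1 : 0 <= eps <= 1) by lra.
  assert (Hub : eps * eps * Rabs b <= 1/2) by (apply Hsmall_b; lra).
  set (s := mkC b y) in *.
  pose proof (Cmod_ge0 s) as Hs0.
  pose proof (Cmod_ge0 (inv N (DeltaE L eps s) i j)) as Hinv0.
  assert (Hu : 0 <= eps * eps <= 1) by nra.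
  destruct (Rle_lt_dec Y0 (Rabs y)) as [Hy|Hy].
  -
    pose proof (lam_lower eps b y He1 Hub) as HL5. fold s in HL5.
    assert (Hx : R0 <= Cmod (lamE eps s)).
    { pose proof (Cmod_mkC_ge b y). fold s in H.
      assert (Cmod s <= Cmod s * (1 + eps * eps * Cmod s)) by nra.
      unfold Y0 in Hy. lra. }
    destruct (large_bound m K0 (Lexp L s) (lamE eps s) i j HK0) as [_ Hlb]; auto.
    { intros; apply HLx; auto. }
    change (fun i j => Cadd (Cmul (lamE eps s) (delta i j)) (Lexp L s i j)) with (DeltaE L eps s) in Hlb.
    eapply Rle_trans; [|apply Rmax_l]. unfold B1.
    apply Rle_trans with (5 * Cmod (lamE eps s) * Cmod (inv N (DeltaE L eps s) i j)).
    + apply Rmult_le_compat_r; auto.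
    + fold N in Hlb. nra.
  -
    assert (Hs : Cmod s <= S0).
    { eapply Rle_trans; [apply Cmod_mkC_le|]. unfold S0. lra. }
    assert (Hent : forall e, 0 <= e <= 1 -> forall i j, (i < N)%nat -> (j < N)%nat ->
              Cmod (DeltaE L e s i j) <= K2).
    { intros e He' i' j' Hi' Hj'. eapply Rle_trans; [apply (Delta_entry_bound N tau L M); eauto|].
      fold K0 s. unfold K2. nra. }
    assert (Hf : m0 <= Cmod (det N (DeltaE L 0 s))).
    { apply (Hmin y). destruct (Rabs_def2 _ _ Hy). split; lra. }
    assert (Hpert : Cmod (Csub (det N (DeltaE L eps s)) (det N (DeltaE L 0 s))) <= m0 / 2).
    { assert (HA1 : forall i j, (i < N)%nat -> (j < N)%nat -> Cmod (DeltaE L eps s i j) <= K2)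
        by (apply Hent; lra).
      assert (HA2 : forall i j, (i < N)%nat -> (j < N)%nat -> Cmod (DeltaE L 0 s i j) <= K2)
        by (apply Hent; lra).
      assert (HA3 : forall i j, (i < N)%nat -> (j < N)%nat ->
                Cmod (Csub (DeltaE L eps s i j) (DeltaE L 0 s i j)) <= eps * eps * (S0 * S0)).
      { intros i' j' Hi' Hj'. rewrite !DeltaE_E.
          replace (Csub (Cadd (Cmul (lamE eps s) (delta i' j')) (Lexp L s i' j'))
                        (Cadd (Cmul (lamE 0 s) (delta i' j')) (Lexp L s i' j')))
            with (Cmul (Cmul (RtoC (eps * eps)) (Cmul s s)) (delta i' j'))
            by (apply C_ext; unfold lamE; simpl; ring).
          rewrite !Cmod_mul, Cmod_RtoC, Rabs_pos_eq by nra.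
          pose proof (Cmod_delta i' j'). pose proof (Cmod_ge0 (delta i' j')).
          assert (Cmod s * Cmod s <= S0 * S0) by nra.
          assert (eps * eps * (Cmod s * Cmod s) <= eps * eps * (S0 * S0)) by nra.
          nra. }
      eapply Rle_trans.
      { apply (det_lip N _ _ K2 (eps * eps * (S0 * S0)) HK2 ltac:(nra) HA1 HA2 HA3). }
      assert (eps * eps <= eps1) by nra.
      assert (Lip N K2 * (eps * eps * (S0 * S0)) <= eps1 * (Lip N K2 * (S0 * S0))) by nra.
      assert (eps1 * (Lip N K2 * (S0 * S0)) <= m0 / (2 * (Lip N K2 * (S0 * S0) + 1)) * (Lip N K2 * (S0 * S0)))
        by (apply Rmult_le_compat_r; lra).
      assert (m0 / (2 * (Lip N K2 * (S0 * S0) + 1)) * (Lip N K2 * (S0 * S0)) <= m0 / 2).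
      { apply (Rmult_le_reg_l (2 * (Lip N K2 * (S0 * S0) + 1))); [lra|].
        replace (2 * (Lip N K2 * (S0 * S0) + 1) * (m0 / (2 * (Lip N K2 * (S0 * S0) + 1)) * (Lip N K2 * (S0 * S0))))
          with (m0 * (Lip N K2 * (S0 * S0))) by (field; lra).
        nra. }
      lra. }
    assert (Hdet : m0 / 2 <= Cmod (det N (DeltaE L eps s))).
    { pose proof (Cmod_dist (det N (DeltaE L eps s)) (det N (DeltaE L 0 s))).
      pose proof (RRle_abs (- (Cmod (det N (DeltaE L eps s)) - Cmod (det N (DeltaE L 0 s))))) as H1. rewrite Rabs_Ropp in H1. lra. }
    pose proof (small_bound m (DeltaE L eps s) i j K2 (m0 / 2) HK2 ltac:(lra) Hi Hj Hdet
                  (Hent eps He1)) as Hsb.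
    fold N in Hsb.
    eapply Rle_trans; [|apply Rmax_r]. unfold B2.
    assert (Hss : Cmod s * (1 + eps * eps * Cmod s) <= S0 * (1 + S0)) by nra.
    assert (0 <= INR (fact m) * K2 ^ m / (m0 / 2)).
    { apply Rmult_le_pos; [pose proof (pow_le K2 m HK2); nra| left; apply Rinv_0_lt_compat; lra]. }
    apply Rmult_le_compat; auto.
    nra. }
exists eps1. split; [split; lra|]. split.
- exists B. intros eps y He i j Hi Hj.
  pose proof (KEY eps y i j He Hi Hj).
  pose proof (Cmod_ge0 (mkC b y)). pose proof (Cmod_ge0 (inv N (DeltaE L eps (mkC b y)) i j)).
  assert (Cmod (mkC b y) * Cmod (inv N (DeltaE L eps (mkC b y)) i j)
          <= Cmod (mkC b y) * (1 + eps * eps * Cmod (mkC b y)) * Cmod (inv N (DeltaE L eps (mkC b y)) i j)).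
  { apply Rmult_le_compat_r; auto. assert (0 <= eps * eps * Cmod (mkC b y)) by nra. nra. }
  lra.
- exists ((1 + INR N * K0) * B). intros eps y He i j Hi Hj.
  assert (He' : 0 <= eps <= eps1) by lra.
  assert (hd : det N (DeltaE L eps (mkC b y)) <> C0) by (apply hdet; lra).
  assert (hne : eps <> 0) by lra.
  rewrite (MC.D_inv' N L eps (mkC b y) i j hne hd Hi Hj).
  set (s := mkC b y) in *.
  set (P := inv N (DeltaE L eps s)).
  pose proof (Cmod_ge0 s) as Hs0.
  assert (Hu : 0 <= eps * eps <= 1) by nra.
  assert (HBM : B <= (1 + INR N * K0) * B).
  { pose proof (pos_INR N). assert (0 <= INR N * K0) by nra. nra. }
  assert (KP : forall k l, (k < N)%nat -> (l < N)%nat ->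
              Cmod s * (1 + eps * eps * Cmod s) * Cmod (P k l) <= B) by (intros; apply KEY; auto).
  unfold Xmat.
  destruct (Nat.ltb_spec i N) as [Hi'|Hi']; destruct (Nat.ltb_spec j N) as [Hj'|Hj'].
  + rewrite Cmod_mul. fold (muE eps s).
    pose proof (mu_upper eps s ltac:(lra)).
    pose proof (KP i j Hi' Hj'). pose proof (Cmod_ge0 (P i j)). pose proof (Cmod_ge0 (muE eps s)).
    assert (Cmod (muE eps s) * Cmod (P i j) <= (1 + eps * eps * Cmod s) * Cmod (P i j)) by nra.
    nra.
  + rewrite Cmod_mul, Cmod_RtoC, Rabs_pos_eq by nra.
    pose proof (KP i (j - N)%nat Hi' ltac:(lia)). pose proof (Cmod_ge0 (P i (j - N)%nat)).
    assert (eps * eps <= 1 + eps * eps * Cmod s) by nra.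
    assert (eps * eps * Cmod (P i (j - N)%nat) <= (1 + eps * eps * Cmod s) * Cmod (P i (j - N)%nat)) by nra.
    nra.
  + rewrite Cmod_opp.
    destruct (Req_dec (Cmod s) 0) as [Hz|Hz].
    { rewrite Hz, Rmult_0_l. pose proof (pos_INR N). assert (0 <= INR N * K0) by nra. nra. }
    assert (Hsp : 0 < Cmod s) by lra.
    assert (HS : Cmod (Csum N (fun k => Cmul (Lexp L s (i - N)%nat k) (P k j))) <= INR N * (K0 * (B / Cmod s))).
    { apply Csum_bound. intros k Hk. rewrite Cmod_mul.
      assert (Hpk : Cmod (P k j) <= B / Cmod s).
      { pose proof (KP k j Hk Hj'). pose proof (Cmod_ge0 (P k j)).
        apply (Rmult_le_reg_l (Cmod s)); auto.
        replace (Cmod s * (B / Cmod s)) with B by (field; lra).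
        assert (0 <= eps * eps * Cmod s) by nra. nra. }
      apply Rmult_le_compat; auto; try apply Cmod_ge0. apply HLx. lia. }
    assert (Cmod s * (INR N * (K0 * (B / Cmod s))) = INR N * K0 * B) by (field; lra).
    assert (Cmod s * Cmod (Csum N (fun k => Cmul (Lexp L s (i - N)%nat k) (P k j)))
            <= Cmod s * (INR N * (K0 * (B / Cmod s)))) by (apply Rmult_le_compat_l; lra).
    nra.
  + rewrite !Cmod_mul, Cmod_RtoC, Rabs_pos_eq by nra.
    pose proof (KP (i - N)%nat (j - N)%nat ltac:(lia) ltac:(lia)).
    pose proof (Cmod_ge0 (P (i - N)%nat (j - N)%nat)).
    assert (Cmod s * (eps * eps * Cmod s * Cmod (P (i - N)%nat (j - N)%nat))
            <= Cmod s * (1 + eps * eps * Cmod s) * Cmod (P (i - N)%nat (j - N)%nat)) by nra.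
    nra.
Qed.
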